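(* There exists a $(\mathbb{Z}_{40},[1,3,9,27],20)$ Hadamard partitioned difference family in the cyclic group $\mathbb{Z}_{40}$.
   Context: For $B\subseteq\mathbb{Z}_{40}$, $\Delta B$ is the multiset $\{x-y: x,y\in B, x\neq y\}$; for $\mathcal{F}=\{B_1,\dots,B_t\}$, $\Delta\mathcal{F}$ is the multiset union of the $\Delta B_i$. $\mathcal{F}$ is a $(G,[k_1,\dots,k_t],\lambda)$ partitioned difference family if the $B_i$ partition $G$, $|B_i|=k_i$, and $\Delta\mathcal{F}$ contains every non-zero element of $G$ exactly $\lambda$ times; it is Hadamard if $|G|=2\lambda$. *)

(* Defs.v *)
From mathcomp Require Import all_boot all_order all_algebra.
Set Implicit Arguments. Unset Strict Implicit. Unset Printing Implicit Defensive.
Import GRing.Theory.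
Local Open Scope ring_scope.

Definition delta_mult (G : finZmodType) (B : {set G}) (g : G) : nat :=
  #|[set p : G * G | [&& p.1 \in B, p.2 \in B, p.1 != p.2 & p.1 - p.2 == g]]|.

Definition deltaF_mult (G : finZmodType) (F : seq {set G}) (g : G) : nat :=
  (\sum_(B <- F) delta_mult B g)%N.

Definition is_PDF (G : finZmodType) (F : seq {set G}) (ks : seq nat) (lambda : nat) : Prop :=
  [/\ size F = size ks,
      (forall i j, (i < size F)%N -> (j < size F)%N -> i <> j ->
          [disjoint nth set0 F i & nth set0 F j]),
      (forall x : G, exists2 B, B \in F & x \in B),
      (forall i, (i < size F)%N -> #|nth set0 F i| = nth 0%N ks i)
    & (forall g : G, g != 0 -> deltaF_mult F g = lambda)].

Definition is_Hadamard_PDF (G : finZmodType) (F : seq {set G}) (ks : seq nat) (lambda : nat) : Prop :=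
  is_PDF F ks lambda /\ #|G| = (2 * lambda)%N.

(* Main.v *)
Require Import Defs.
From mathcomp Require Import all_boot all_order all_algebra.
Import GRing.Theory.

Definition mkS (s : seq nat) : {set 'Z_40} := [set x : 'Z_40 | (x : nat) \in s].
Definition s1 := [:: 4]. Definition s2 := [:: 14; 24; 34].
Definition s3 := [:: 2; 3; 7; 20; 26; 28; 29; 31; 35].
Definition s4 := [:: 0; 1; 5; 6; 8; 9; 10; 11; 12; 13; 15; 16; 17; 18; 19; 21; 22; 23; 25; 27; 30; 32; 33; 36; 37; 38; 39].
Definition ss := [:: s1; s2; s3; s4].
Definition FF : seq {set 'Z_40} := map mkS ss.

Lemma card_Z (P : pred 'Z_40) : #|[set x | P x]| = count P (ord_enum 40).
Proof.
rewrite cardE /enum_mem size_filter (_ : Finite.enum _ = ord_enum 40); last first.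
  apply: (inj_map val_inj); rewrite val_ord_enum -enumT.
  exact: (val_enum_ord (Zp_trunc 40).+2).
by apply: eq_count => x; rewrite inE in_set.
Qed.

Lemma delta_eq (B : {set 'Z_40}) (g : 'Z_40) : g != 0%R ->
  delta_mult B g = #|[set x | (x \in B) && ((x - g)%R \in B)]|.
Proof.
move=> g0; rewrite /delta_mult.
have -> : [set p : 'Z_40 * 'Z_40 | [&& p.1 \in B, p.2 \in B, p.1 != p.2 & (p.1 - p.2)%R == g]]
   = (fun x => (x, (x - g)%R)) @: [set x | (x \in B) && ((x - g)%R \in B)].
  apply/setP => -[a b]; rewrite inE /=; apply/and4P/imsetP.
    case=> aB bB _ /eqP e; exists a; last by rewrite -e opprB addrC subrK.
    by rewrite inE aB -e opprB addrC subrK.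
  case=> x; rewrite inE => /andP[xB xgB] [-> ->]; split => //.
    apply: contra g0 => /eqP h.
    have : (x - (x - g) = 0)%R by rewrite -h subrr.
    by rewrite opprB addrC subrK => ->.
  by rewrite opprB addrC subrK.
by apply: card_imset => x y [].
Qed.

Lemma val_sub (x g : 'Z_40) : val (x - g)%R = (val x + (40 - val g) %% 40) %% 40.
Proof. by []. Qed.

Definition chk (s : seq nat) (k : nat) : nat :=
  count (fun x => (x \in s) && (((x + (40 - k) %% 40) %% 40) \in s)) (iota 0 40).

Lemma chk_ok : all (fun k => sumn (map (fun s => chk s k) ss) == 20) (iota 1 39).
Proof. by vm_compute. Qed.

Lemma disj_chk : all (fun i => all (fun j => (i == j) ||
   ~~ has (fun x => x \in nth [::] ss j) (nth [::] ss i)) (iota 0 4)) (iota 0 4).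
Proof. by vm_compute. Qed.

Lemma cov_chk : all (fun k => has (fun s => k \in s) ss) (iota 0 40).
Proof. by vm_compute. Qed.

Lemma card_chk : all (fun i => count (fun k => k \in nth [::] ss i) (iota 0 40)
   == nth 0%N [:: 1%N; 3%N; 9%N; 27%N] i) (iota 0 4).
Proof. by vm_compute. Qed.

Lemma chkE (s : seq nat) (g : 'Z_40) : g != 0%R -> delta_mult (mkS s) g = chk s (val g).
Proof.
move=> g0; rewrite delta_eq // card_Z /chk -val_ord_enum count_map.
by apply: eq_count => x; rewrite /= !inE val_sub.
Qed.

Theorem mainTheorem12 :
  exists F : seq {set 'Z_40}, is_Hadamard_PDF F [:: 1%N; 3%N; 9%N; 27%N] 20.
Proof.
exists FF; split; last by rewrite card_ord.
split => //.
- move=> i j hi hj ne.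
  move: (disj_chk) => /seq.allP HH.
  have H0 : all (fun j => (i == j) ||
     ~~ has (fun x => x \in nth [::] ss j) (nth [::] ss i)) (iota 0 4).
    by apply: HH; rewrite mem_iota.
  have HH2 := seq.allP H0.
  have := HH2 j; rewrite mem_iota /= => /(_ hj).
  rewrite (introF eqP ne) /= => /hasPn H.
  rewrite !(nth_map [::]) //; rewrite disjoint_subset; apply/subsetP => x; rewrite !inE => h1.
  by move: (H _ h1).
- move=> x; move: (cov_chk) => /seq.allP HH.
  have H1 : has (fun s => val x \in s) ss by apply: HH; rewrite mem_iota /=.
  move/hasP: H1 => [s sin ks]; exists (mkS s); first by apply: map_f.
  by rewrite inE.
- move=> i hi; rewrite (nth_map [::]) // /mkS card_Z.
  move: (card_chk) => /seq.allP HH.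
  have H1 : count (fun k => k \in nth [::] ss i) (iota 0 40) == nth 0%N [:: 1%N; 3%N; 9%N; 27%N] i.
    by apply: HH; rewrite mem_iota.
  by move: H1; rewrite -val_ord_enum count_map => /eqP.
- move=> g g0; rewrite /deltaF_mult big_map.
  rewrite (eq_bigr (fun s => chk s (val g))); last by move=> s _; apply: chkE.
  have gpos : (0 < val g)%N.
    by rewrite lt0n; apply: contra g0 => /eqP h; apply/eqP/val_inj.
  move: (chk_ok) => /seq.allP HH.
  have H1 : sumn (map (fun s => chk s (val g)) ss) == 20.
    by apply: HH; rewrite mem_iota gpos /=.
  by move: H1; rewrite /ss !big_cons big_nil /= => /eqP.
Qed.
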